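(* Let $n,m\ge1$, $r>0$, and let $\mathbf b_1,\dots,\mathbf b_m\in[0,\infty)^n$ be nonzero vectors. Put $D_{ij}=\frac{r}{m}(\mathbf b_i\cdot\mathbf b_j)$ and $\overline D=\max_{i,j}D_{ij}$. Define $\alpha^{(t)}\in\mathbb{R}^m$, $t\ge0$, by $\alpha^{(0)}_k=\sqrt{1/(\overline D m)}$ for all $k$, and, given $\alpha^{(t)}$: let $E_i^{(t)}=\sum_{j=1}^m D_{ij}\alpha^{(t)}_i\alpha^{(t)}_j-1$, choose $k=k_t$ with $|E^{(t)}_k|=\max_i|E^{(t)}_i|$, set $\alpha^{(t+1)}_i=\alpha^{(t)}_i$ for $i\neq k$ and $\alpha^{(t+1)}_k=\frac{-s+\sqrt{s^2+4D_{kk}}}{2D_{kk}}$ with $s=\sum_{i\ne k}D_{ik}\alpha^{(t)}_i$. Let $E^{(t)}=\sum_{i=1}^m|E^{(t)}_i|$. Then $\lim_{t\to\infty}E^{(t)}=0$. *)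

(* Defs.v *)
From mathcomp Require Import all_boot all_order all_algebra.
From mathcomp Require Import all_classical all_reals all_analysis.
Import Order.TTheory GRing.Theory Num.Theory.
Local Open Scope ring_scope.

Definition Dmat {R : realType} {n m : nat} (r : R) (b : 'I_m -> 'I_n -> R)
  (i j : 'I_m) : R :=
  r / m%:R * (\sum_(l < n) b i l * b j l).

(* Dbar = max_{i,j} D_{ij}; all D_{ij} >= 0 here, so 0 as neutral element is harmless *)
Definition Dbar {R : realType} {n m : nat} (r : R) (b : 'I_m -> 'I_n -> R) : R :=
  \big[Num.max/0]_(i < m) \big[Num.max/0]_(j < m) Dmat r b i j.

Definition Ecoord {R : realType} {n m : nat} (r : R) (b : 'I_m -> 'I_n -> R)
  (a : 'I_m -> R) (i : 'I_m) : R :=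
  \sum_(j < m) Dmat r b i j * a i * a j - 1.

Definition sval {R : realType} {n m : nat} (r : R) (b : 'I_m -> 'I_n -> R)
  (a : 'I_m -> R) (k : 'I_m) : R :=
  \sum_(i < m | i != k) Dmat r b i k * a i.

Definition newcoord {R : realType} {n m : nat} (r : R) (b : 'I_m -> 'I_n -> R)
  (a : 'I_m -> R) (k : 'I_m) : R :=
  let s := sval r b a k in
  (- s + Num.sqrt (s ^+ 2 + 4 * Dmat r b k k)) / (2 * Dmat r b k k).

(* Main.v *)
Require Import Defs.
From mathcomp Require Import all_boot all_order all_algebra.
From mathcomp Require Import all_classical all_reals all_analysis.
From mathcomp Require Import ring lra.
Import Order.TTheory GRing.Theory Num.Theory.
Import numFieldNormedType.Exports.
Local Open Scope ring_scope.

Lemma ln_le_sub1 {R : realType} (x : R) : 0 < x -> ln x <= x - 1.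
Proof.
move=> x0; have := @le_ln1Dx R (x - 1); rewrite (addrC 1) subrK; apply; lra.
Qed.

Lemma key_step (R : realType) (a s x y : R) :
  0 < a -> 0 <= s -> 0 < y -> a * y ^+ 2 + s * y = 1 -> 0 < x ->
  Num.min 1 ((x * (a * x + s) - 1) ^+ 2 / 225)
  <= (a * x ^+ 2 + 2 * x * s) / 2 - ln x - ((a * y ^+ 2 + 2 * y * s) / 2 - ln y).
Proof.
move=> a0 s0 y0 hy x0.
set v := Num.sqrt (x / y).
have v0 : 0 < v by rewrite sqrtr_gt0 divr_gt0.
have hx : x = v ^+ 2 * y by rewrite sqr_sqrtr ?divfK ?gt_eqF // ltW // divr_gt0.
have hln : ln x - ln y <= 2 * (v - 1).
  rewrite -ln_div ?posrE // hx mulfK ?gt_eqF // lnXn //.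
  rewrite mulr2n; have := ln_le_sub1 _ v0; lra.
set c := a * y ^+ 2.
have hs : s * y = 1 - c by rewrite /c; lra.
have c0 : 0 < c by rewrite /c mulr_gt0 // exprn_gt0.
have c1 : c <= 1 by rewrite -hy lerDl mulr_ge0 // ltW.
have hE : x * (a * x + s) - 1 = (v ^+ 2 - 1) * (c * v ^+ 2 + 1).
  rewrite hx /c; have -> : s = (1 - c) / y by rewrite -hs mulfK ?gt_eqF.
  rewrite /c; field; rewrite gt_eqF //.
have hD : (a * x ^+ 2 + 2 * x * s) / 2 - ln x - ((a * y ^+ 2 + 2 * y * s) / 2 - ln y)
   = c * (v ^+ 2 - 1) ^+ 2 / 2 + (v ^+ 2 - 1) - (ln x - ln y).
  rewrite hx /c; have -> : s = (1 - c) / y by rewrite -hs mulfK ?gt_eqF.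
  rewrite /c; field; rewrite gt_eqF //.
rewrite hD hE.
have H1 : (v - 1) ^+ 2 <= c * (v ^+ 2 - 1) ^+ 2 / 2 + (v ^+ 2 - 1) - (ln x - ln y).
  have : 0 <= c * (v ^+ 2 - 1) ^+ 2 / 2 by rewrite divr_ge0 // mulr_ge0 ?sqr_ge0 // ltW.
  move: hln; set L := ln x - ln y; set Q := c * _ / 2; nra.
apply: le_trans H1.
have [hv|hv] := leP 1 ((v - 1) ^+ 2); first by rewrite ge_min hv.
rewrite ge_min; apply/orP; right.
have hv2 : v < 2 by nra.
rewrite ler_pdivrMr //.
rewrite !exprMn.
have -> : (v ^+ 2 - 1) = (v - 1) * (v + 1) by ring.
rewrite exprMn -mulrA mulrC [X in _ <= X]mulrC; apply: ler_wpM2r; first exact: sqr_ge0.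
have h1 : (v + 1) ^+ 2 <= 9 by nra.
have h2 : (c * v ^+ 2 + 1) ^+ 2 <= 25.
  have : c * v ^+ 2 <= 4 by nra.
  have : 0 <= c * v ^+ 2 by rewrite mulr_ge0 ?sqr_ge0 // ltW.
  nra.
have -> : (225 : R) = 9 * 25 by lra.
by apply: ler_pM => //; exact: sqr_ge0.
Qed.


Section S.
Variables (R : realType) (n m : nat) (r : R) (b : 'I_m -> 'I_n -> R).
Local Notation D := (Dmat r b).

Lemma Dsym i j : D i j = D j i.
Proof. by rewrite /Dmat; congr (_ * _); apply: eq_bigr => l _; rewrite mulrC. Qed.

Definition Qf (a : 'I_m -> R) := \sum_(i < m) \sum_(j < m) D i j * a i * a j.
Definition Rf (a : 'I_m -> R) k :=
  \sum_(i < m | i != k) \sum_(j < m | j != k) D i j * a i * a j.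
Definition Lf (a : 'I_m -> R) := \sum_(i < m) ln (a i).
Definition ff a := Qf a / 2 - Lf a.

Lemma Qsplit a k : Qf a = D k k * a k ^+ 2 + 2 * a k * Defs.sval r b a k + Rf a k.
Proof.
rewrite /Qf (bigD1 k) //= (bigD1 k) //=.
have -> : \sum_(i < m | i != k) \sum_(j < m) D i j * a i * a j
   = a k * Defs.sval r b a k + Rf a k.
  rewrite /Rf /sval mulr_sumr -big_split /=; apply: eq_bigr => i ik.
  by rewrite (bigD1 k) //= mulrC mulrA.
have -> : \sum_(j < m | j != k) D k j * a k * a j = a k * Defs.sval r b a k.
  rewrite /sval mulr_sumr; apply: eq_bigr => j jk.
  by rewrite Dsym mulrCA mulrA.
ring.
Qed.

Lemma Esplit a k : Ecoord r b a k = a k * (D k k * a k + Defs.sval r b a k) - 1.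
Proof.
rewrite /Ecoord (bigD1 k) //=; congr (_ - _).
rewrite /sval mulrDr mulr_sumr; congr (_ + _); first by ring.
by apply: eq_bigr => j jk; rewrite Dsym mulrCA mulrA.
Qed.

Lemma agree_s a a' k : (forall i, i != k -> a' i = a i) ->
  Defs.sval r b a' k = Defs.sval r b a k.
Proof. by move=> h; apply: eq_bigr => i ik; rewrite h. Qed.

Lemma agree_R a a' k : (forall i, i != k -> a' i = a i) -> Rf a' k = Rf a k.
Proof.
by move=> h; apply: eq_bigr => i ik; apply: eq_bigr => j jk; rewrite !h.
Qed.

Lemma Lsplit a k : Lf a = ln (a k) + \sum_(i < m | i != k) ln (a i).
Proof. by rewrite /Lf (bigD1 k). Qed.

Lemma ff_step a a' k : (forall i, i != k -> a' i = a i) ->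
  ff a - ff a' =
  (D k k * a k ^+ 2 + 2 * a k * Defs.sval r b a k) / 2 - ln (a k) -
  ((D k k * a' k ^+ 2 + 2 * a' k * Defs.sval r b a k) / 2 - ln (a' k)).
Proof.
move=> h; rewrite /ff !(Qsplit _ k) !(Lsplit _ k) (agree_s _ _ _ h) (agree_R _ _ _ h).
have -> : \sum_(i < m | i != k) ln (a' i) = \sum_(i < m | i != k) ln (a i).
  by apply: eq_bigr => i ik; rewrite h.
ring.
Qed.

Hypothesis hr : 0 < r.
Hypothesis hb : forall i l, 0 <= b i l.

Lemma D_ge0 i j : 0 <= D i j.
Proof.
apply: mulr_ge0; first by rewrite divr_ge0 ?ler0n ?ltW.
by apply: sumr_ge0 => l _; rewrite mulr_ge0.
Qed.

Lemma Dkk_gt0 k : (0 < m)%N -> (exists l, b k l != 0) -> 0 < D k k.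
Proof.
move=> hm [l hl]; rewrite /Dmat mulr_gt0 ?divr_gt0 ?ltr0n //.
rewrite (bigD1 l) //=; apply: ltr_pwDl.
  by rewrite mulr_gt0 // lt_def hl hb.
by apply: sumr_ge0 => j _; rewrite mulr_ge0.
Qed.

Lemma sval_ge0 a k : (forall i, 0 <= a i) -> 0 <= Defs.sval r b a k.
Proof. by move=> h; apply: sumr_ge0 => i _; rewrite mulr_ge0 ?D_ge0. Qed.

Lemma newcoord_prop a k : 0 < D k k -> 0 <= Defs.sval r b a k ->
  0 < newcoord r b a k /\
  D k k * newcoord r b a k ^+ 2 + Defs.sval r b a k * newcoord r b a k = 1.
Proof.
rewrite /newcoord.
set s := Defs.sval r b a k; set d := D k k; move=> ha hs.
set w := Num.sqrt (s ^+ 2 + 4 * d).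
have hw2 : w ^+ 2 = s ^+ 2 + 4 * d by rewrite sqr_sqrtr // addr_ge0 ?sqr_ge0 // mulr_ge0 // ltW.
have hw0 : 0 <= w by exact: sqrtr_ge0.
have hws : s < w.
  rewrite ltNge; apply/negP => h.
  have : w ^+ 2 <= s ^+ 2 by rewrite ler_pXn2r // ?nnegrE.
  rewrite hw2; have : 0 < 4 * d by rewrite mulr_gt0.
  lra.
split; first by apply: divr_gt0; [lra | rewrite mulr_gt0].
clearbody w s d.
apply/eqP; rewrite -subr_eq0; apply/eqP.
have -> : d * ((- s + w) / (2 * d)) ^+ 2 + s * ((- s + w) / (2 * d)) - 1
   = (w ^+ 2 - s ^+ 2 - 4 * d) / (4 * d).
  by field; rewrite gt_eqF.
have -> : w ^+ 2 - s ^+ 2 - 4 * d = 0 by lra.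
by rewrite mul0r.
Qed.

Lemma ff_lower (a : 'I_m -> R) : (forall i, 0 < D i i) -> (forall i, 0 < a i) ->
  \sum_(i < m) (1 - 1 / (2 * D i i)) <= ff a.
Proof.
move=> hD ha.
have hQ : \sum_(i < m) D i i * a i ^+ 2 <= Qf a.
  apply: ler_sum => i _; rewrite (bigD1 i) //= -mulrA -expr2 lerDl.
  by apply: sumr_ge0 => j _; apply: mulr_ge0; [apply: mulr_ge0; [exact: D_ge0|exact: ltW]|exact: ltW].
have hL : Lf a <= \sum_(i < m) (a i - 1).
  by apply: ler_sum => i _; exact: ln_le_sub1.
apply: (@le_trans _ _ (\sum_(i < m) (D i i * a i ^+ 2 / 2 - (a i - 1)))).
  apply: ler_sum => i _.
  have hd := hD i; have hai := ha i.
  rewrite -subr_ge0.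
  have -> : D i i * a i ^+ 2 / 2 - (a i - 1) - (1 - 1 / (2 * D i i))
     = (D i i * a i - 1) ^+ 2 / (2 * D i i) by field; rewrite gt_eqF.
  by rewrite divr_ge0 ?sqr_ge0 // mulr_ge0 // ltW.
rewrite /ff big_split /= -sumrN -mulr_suml.
apply: lerD; first by rewrite ler_pM2r.
by apply: ler_sum => i _; rewrite lerN2; exact: ln_le_sub1.
Qed.

End S.
Arguments ff {R n m} r b a.
Arguments Qf {R n m} r b a.
Arguments Rf {R n m} r b a k.
Arguments Lf {R m} a.
Arguments Dsym {R n m r b}.
Arguments Qsplit {R n m r b}.
Arguments Esplit {R n m r b}.
Arguments agree_s {R n m r b}.
Arguments agree_R {R n m r b}.
Arguments Lsplit {R m}.
Arguments ff_step {R n m r b}.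
Arguments D_ge0 {R n m r b}.
Arguments Dkk_gt0 {R n m r b}.
Arguments sval_ge0 {R n m r b}.
Arguments newcoord_prop {R n m r b}.
Arguments ff_lower {R n m r b}.

Local Open Scope classical_set_scope.
Local Open Scope ring_scope.

Theorem lemma5 (R : realType) (n m : nat) (r : R)
  (b : 'I_m -> 'I_n -> R)
  (alpha : nat -> 'I_m -> R) (kk : nat -> 'I_m) :
  (0 < n)%N -> (0 < m)%N -> 0 < r ->
  (forall i l, 0 <= b i l) ->
  (forall i, exists l, b i l != 0) ->
  (forall k, alpha 0%N k = Num.sqrt (1 / (Dbar r b * m%:R))) ->
  (forall t i, `|Ecoord r b (alpha t) i| <= `|Ecoord r b (alpha t) (kk t)|) ->
  (forall t i, i != kk t -> alpha t.+1 i = alpha t i) ->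
  (forall t, alpha t.+1 (kk t) = newcoord r b (alpha t) (kk t)) ->
  (fun t => \sum_(i < m) `|Ecoord r b (alpha t) i|) @ \oo --> (0 : R).
Proof.
move=> hn hm hr hb hbnz h0 hmax hoff hnew.
have hD : forall i, 0 < Dmat r b i i := fun i => Dkk_gt0 hr hb i hm (hbnz i).
pose i0 := Ordinal hm.
have hDbar : 0 < Dbar r b.
  apply: (lt_le_trans (hD i0)); rewrite /Dbar.
  apply: le_trans (le_bigmax _ _ i0).
  exact: (le_bigmax _ (fun j => Dmat r b i0 j) i0).
have pos : forall t i, 0 < alpha t i.
  elim=> [|t IH] i.
    by rewrite h0 sqrtr_gt0 divr_gt0 // mulr_gt0 // ltr0n.
  have [->|ne] := eqVneq i (kk t); last by rewrite hoff.
  have hs : 0 <= Defs.sval r b (alpha t) (kk t).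
    by apply: sval_ge0 => // j; exact: ltW.
  by rewrite hnew; case: (newcoord_prop (alpha t) (kk t) (hD _) hs).
pose g t := Num.min 1 (Ecoord r b (alpha t) (kk t) ^+ 2 / 225).
have g0 : forall t, 0 <= g t.
  by move=> t; rewrite le_min ler01 divr_ge0 ?sqr_ge0.
have gstep : forall t, g t <= ff r b (alpha t) - ff r b (alpha t.+1).
  move=> t; rewrite (ff_step _ _ _ (hoff t)) hnew /g Esplit.
  have hs : 0 <= Defs.sval r b (alpha t) (kk t) by apply: sval_ge0 => // j; exact: ltW.
  have [ny1 ny2] := newcoord_prop (alpha t) (kk t) (hD _) hs.
  by apply: key_step => //.
have hpart : forall T, \sum_(t < T) g t <= ff r b (alpha 0%N) - ff r b (alpha T).
  elim=> [|T IH]; first by rewrite big_ord0 subrr.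
  rewrite big_ord_recr /=.
  have := gstep T; lra.
set B := \sum_(i < m) (1 - 1 / (2 * Dmat r b i i)).
have hB : forall T, B <= ff r b (alpha T) by move=> T; apply: ff_lower.
have cs : cvgn (series g).
  apply: nondecreasing_is_cvgn.
    by apply/nondecreasing_seqP => k; rewrite seriesSr lerDl.
  exists (ff r b (alpha 0%N) - B) => _ [T _ <-].
  rewrite seriesEord /=; have := hpart T; have := hB T; lra.
have gcvg := cvg_series_cvg_0 cs.
apply/cvgr0Pnorm_lt => e e0.
have mpos : (0 : R) < m%:R by rewrite ltr0n.
pose eps := Num.min 1 ((e / m%:R) ^+ 2 / 225).
have eps0 : 0 < eps by rewrite lt_min ltr01 divr_gt0 // exprn_gt0 // divr_gt0.
have hm1 : eps <= 1 by rewrite /eps ge_min lexx.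
have hm2 : eps <= (e / m%:R) ^+ 2 / 225 by rewrite /eps ge_min lexx orbT.
move/cvgr0Pnorm_lt: gcvg => /(_ eps eps0); apply: filterS => t hgt.
rewrite ger0_norm ?g0 // in hgt.
set E := Ecoord r b (alpha t) (kk t) in hgt.
have hE : `|E| < e / m%:R.
  have hle : E ^+ 2 / 225 < (e / m%:R) ^+ 2 / 225.
    have [h|h] := leP 1 (E ^+ 2 / 225).
      move: hgt; rewrite /g -/E (min_l h) => hgt.
      by move: (lt_le_trans hgt hm1); rewrite ltxx.
    move: hgt; rewrite /g -/E (min_r (ltW h)) => hgt.
    exact: (lt_le_trans hgt hm2).
  rewrite ltr_pM2r // in hle.
  have he0 : 0 <= e / m%:R by rewrite divr_ge0 // ltW.
  rewrite -(ltr_pXn2r (_ : (0 < 2)%N)) ?nnegrE ?normr_ge0 //.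
  by rewrite real_normK ?num_real.
rewrite ger0_norm; last by apply: sumr_ge0 => i _.
apply: (le_lt_trans (ler_sum _ (fun i _ => hmax t i))).
rewrite sumr_const card_ord -mulr_natr -ltr_pdivlMr //.
Qed.
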